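(* Let $\mathbf P=UV^\top$ be the transition matrix of a Markov chain on $\{1,\dots,p\}$ with stationary distribution $\pi$ having all entries positive, where $U,V\in\mathbb R^{p\times r}$ are entrywise nonnegative with $U\mathbf 1_r=\mathbf 1_p$, $V^\top\mathbf 1_p=\mathbf 1_r$, each meta-state has an anchor state, and $\mathrm{rank}(U)=r$. Let $\mathbf h_1,\dots,\mathbf h_r$ be the right singular vectors of $\mathbf Q=\mathrm{diag}(\pi)\mathbf P[\mathrm{diag}(\pi)]^{-1/2}$ associated with its nonzero singular values $\sigma_1\ge\dots\ge\sigma_r$, and assume $\mathbf h_1$ has all coordinates positive. Let $\mathbf D=[\mathrm{diag}(\mathbf h_1)]^{-1}[\mathbf h_2,\dots,\mathbf h_r]\in\mathbb R^{p\times(r-1)}$. Then there exists a simplex $\mathcal S_0^*\subset\mathbb R^{r-1}$ with $r$ vertices $\mathbf b_1,\dots,\mathbf b_r$ such that all rows of $\mathbf D$ are contained in this simplex. Furthermore, for all anchor states $j$ of a same meta-state, the $j$-th row of $\mathbf D$ falls exactly onto one vertex of this simplex.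
   Context: A state $j$ is an anchor state of meta-state $k$ if $V_{jk}>0$ and $V_{js}=0$ for all $s\neq k$. *)

(* Defs.v *)
From HB Require Import structures.
From mathcomp Require Import all_boot all_order all_algebra.
Set Implicit Arguments. Unset Strict Implicit. Unset Printing Implicit Defensive.
Import Order.TTheory GRing.Theory Num.Theory.
Local Open Scope ring_scope.

(* Conventions: states are indexed by 'I_p, meta-states by 'I_(r.+1)
   (so the paper's r is r.+1 here), vectors in R^(r-1) are row vectors 'rV_r. *)

Definition is_stochastic (R : realFieldType) (p : nat) (P : 'M[R]_p) : Prop :=
  (forall i j, 0 <= P i j) /\ (forall i, \sum_j P i j = 1).

Definition is_stationary (R : realFieldType) (p : nat) (P : 'M[R]_p) (pi : 'rV[R]_p) : Prop :=
  [/\ pi *m P = pi, \sum_j pi 0 j = 1 & forall j, 0 <= pi 0 j].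

Definition anchor (R : realFieldType) (p m : nat) (V : 'M[R]_(p, m)) (j : 'I_p) (k : 'I_m) : Prop :=
  0 < V j k /\ forall s, s != k -> V j s = 0.

Definition Qmat (R : rcfType) (p : nat) (pi : 'rV[R]_p) (P : 'M[R]_p) : 'M[R]_p :=
  diag_mx pi *m P *m diag_mx (\row_j (Num.sqrt (pi 0 j))^-1).

(* Thin SVD Q = G diag(s) H^T: s are the nonzero singular values
   (positive, nonincreasing), columns of G / H the corresponding
   left / right singular vectors (orthonormal). *)
Definition thin_svd (R : realFieldType) (p m : nat) (Q : 'M[R]_p)
    (G : 'M[R]_(p, m)) (s : 'rV[R]_m) (H : 'M[R]_(p, m)) : Prop :=
  [/\ G^T *m G = 1%:M, H^T *m H = 1%:M,
      (forall i, 0 < s 0 i),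
      (forall i j : 'I_m, (i <= j)%N -> s 0 j <= s 0 i)
    & Q = G *m diag_mx s *m H^T].

Definition Dmat (R : realFieldType) (p r : nat) (H : 'M[R]_(p, r.+1)) : 'M[R]_(p, r) :=
  \matrix_(j < p, l < r) (H j (lift ord0 l) / H j ord0).

(* The rows of B : 'M_(r.+1, r) are the r.+1 vertices of a (nondegenerate)
   simplex in R^r, i.e. they are affinely independent: the r vectors
   b_{k} - b_0 (k = 1..r) are linearly independent. *)
Definition simplex_vertices (R : realFieldType) (r : nat) (B : 'M[R]_(r.+1, r)) : Prop :=
  (\matrix_(k < r) (row (lift ord0 k) B - row ord0 B)) \in unitmx.

Definition in_simplex (R : realFieldType) (r : nat) (B : 'M[R]_(r.+1, r)) (x : 'rV[R]_r) : Prop :=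
  exists w : 'rV[R]_(r.+1),
    [/\ forall k, 0 <= w 0 k, \sum_k w 0 k = 1 & x = w *m B].

(* Main.v *)
Require Import Defs.
From HB Require Import structures.
From mathcomp Require Import all_boot all_order all_algebra.
From mathcomp Require Import ring lra.
Import Order.TTheory GRing.Theory Num.Theory.
Local Open Scope ring_scope.

Lemma H_factor (R : rcfType) (p r : nat)
    (U V : 'M[R]_(p, r.+1)) (pi : 'rV[R]_p)
    (G H : 'M[R]_(p, r.+1)) (s : 'rV[R]_(r.+1)) :
  thin_svd (Qmat pi (U *m V^T)) G s H ->
  H = diag_mx (\row_j (Num.sqrt (pi 0 j))^-1) *m V *m
      (U^T *m diag_mx pi *m G *m diag_mx (\row_i (s 0 i)^-1)).
Proof.
case=> GG HH spos _ eQ.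
have eQT : (Qmat pi (U *m V^T))^T = H *m diag_mx s *m G^T.
  by rewrite eQ !trmx_mul trmxK tr_diag_mx mulmxA.
have : (Qmat pi (U *m V^T))^T *m G *m diag_mx (\row_i (s 0 i)^-1) = H.
  rewrite eQT -!mulmxA (mulmxA G^T) GG mul1mx mulmx_diag.
  have -> : diag_mx (\row_j (s 0 j * (\row_i (s 0 i)^-1) 0 j)) = 1%:M :> 'M[R]_(r.+1).
    apply/matrixP=> i j; rewrite !mxE.
    case: eqP => [->|]; rewrite ?mulr1n ?mulr0n //.
    by rewrite mulfV // gt_eqF.
  by rewrite mulmx1.
move=> <-.
rewrite /Qmat !trmx_mul !tr_diag_mx trmxK !mulmxA.
done.
Qed.

Lemma sum_anchor (R : realFieldType) (p m : nat) (V : 'M[R]_(p, m)) j k (f : 'I_m -> R) :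
  anchor V j k -> \sum_s V j s * f s = V j k * f k.
Proof.
case=> _ h; rewrite (bigD1 k) //= big1 ?addr0 // => s /h ->; by rewrite mul0r.
Qed.

Theorem mainTheorem14 (R : rcfType) (p r : nat)
    (U V : 'M[R]_(p, r.+1)) (pi : 'rV[R]_p)
    (G H : 'M[R]_(p, r.+1)) (s : 'rV[R]_(r.+1)) :
  (forall i k, 0 <= U i k) ->
  (forall i k, 0 <= V i k) ->
  U *m (const_mx 1 : 'cV[R]_(r.+1)) = const_mx 1 ->
  V^T *m (const_mx 1 : 'cV[R]_p) = const_mx 1 ->
  is_stochastic (U *m V^T) ->
  is_stationary (U *m V^T) pi ->
  (forall j, 0 < pi 0 j) ->
  (forall k, exists j, anchor V j k) ->
  \rank U = r.+1 ->
  thin_svd (Qmat pi (U *m V^T)) G s H ->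
  (forall j, 0 < H j ord0) ->
  exists B : 'M[R]_(r.+1, r),
    [/\ simplex_vertices B,
        (forall j, in_simplex B (row j (Dmat H)))
      & (forall k j, anchor V j k -> row j (Dmat H) = row k B)].
Proof.
move=> _ Vge0 _ _ _ _ pipos anch _ svd Hpos.
have eH := @H_factor R p r U V pi G H s svd.
set W := diag_mx _ in eH.
set M := (U^T *m _ *m _ *m _) in eH.
clearbody M.
set c := fun j : 'I_p => (Num.sqrt (pi 0 j))^-1.
have cpos : forall j, 0 < c j.
  by move=> j; rewrite invr_gt0 sqrtr_gt0.
have Hje : forall j l, H j l = c j * \sum_k V j k * M k l.
  move=> j l; rewrite eH -mulmxA mul_diag_mx !mxE.
  by congr (_ * _); apply: eq_bigr => k _; rewrite mxE.
set Y := fun j l => \sum_k V j k * M k l.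
have Y0pos : forall j, 0 < Y j ord0.
  move=> j; have := Hpos j; rewrite Hje.
  by rewrite pmulr_rgt0.
have Munit : M \in unitmx.
  have : (H^T *m W *m V) *m M = 1%:M.
    have -> : H^T *m W *m V *m M = H^T *m (W *m V *m M) by rewrite !mulmxA.
    by rewrite -eH; case: svd.
  by case/mulmx1_unit.
have Mk0 : forall k, 0 < M k ord0.
  move=> k; case: (anch k) => j aj.
  have := Y0pos j; rewrite /Y (sum_anchor _ _ _ _ _ _ _ aj).
  case: aj => vpos _.
  by rewrite pmulr_rgt0.
pose B := \matrix_(k < r.+1, l < r) (M k (lift ord0 l) / M k ord0).
have BE : forall k l, B k l = M k (lift ord0 l) / M k ord0 by move=> k l; rewrite mxE.
clearbody B.
have Drow : forall j l, Dmat H j l = Y j (lift ord0 l) / Y j ord0.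
  move=> j l; rewrite mxE !Hje /Y.
  have := cpos j; move: (c j) => cj cjpos.
  rewrite invfM mulrACA mulfV ?mul1r //; by rewrite gt_eqF.
exists B; split.
-
  pose Mi := invmx M.
  have MMi : forall i j, \sum_l M i l * Mi l j = (i == j)%:R.
    move=> i j; have /matrixP /(_ i j) := mulmxV Munit.
    by rewrite !mxE.
  have aux : forall i j, \sum_l B i l * Mi (lift ord0 l) j
                         = ((i == j)%:R - M i ord0 * Mi ord0 j) / M i ord0.
    move=> i j; rewrite -(MMi i j) big_ord_recl [_ + _ - _]addrC addKr mulr_suml.
    apply: eq_bigr => l _; rewrite BE; field.
    by rewrite gt_eqF.
  pose F := \matrix_(l < r, k < r) (Mi (lift ord0 l) (lift ord0 k) * M (lift ord0 k) ord0).
  have : \matrix_(k < r) (row (lift ord0 k) B - row ord0 B) *m F = 1%:M.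
    apply/matrixP => k k'; rewrite !mxE.
    under eq_bigr => l _ do rewrite !mxE mulrBl.
    rewrite sumrB.
    under eq_bigr => l _ do rewrite mulrA.
    under [X in _ - X]eq_bigr => l _ do rewrite mulrA.
    rewrite -!mulr_suml.
    rewrite !aux.
    have -> : (ord0 == lift ord0 k' :> 'I_r.+1) = false.
      by apply/negbTE; rewrite neq_lift.
    rewrite (inj_eq (@lift_inj _ ord0)).
    have := Mk0 (lift ord0 k); have := Mk0 ord0.
    case: eqP => [->|_] h1 h2; rewrite ?mulr1n ?mulr0n.
      by field; rewrite (lt0r_neq0 h1) (lt0r_neq0 h2).
    by field; rewrite (lt0r_neq0 h1) (lt0r_neq0 h2).
  by case/mulmx1_unit.
- move=> j; exists (\row_k (V j k * M k ord0 / Y j ord0)); split.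
  + move=> k; rewrite mxE; apply: divr_ge0; last exact: ltW.
    by apply: mulr_ge0 => //; apply: ltW.
  + under eq_bigr => k _ do rewrite mxE.
    by rewrite -mulr_suml mulfV // (lt0r_neq0 (Y0pos j)).
  + apply/matrixP=> i l; rewrite [LHS]mxE Drow [RHS]mxE /Y mulr_suml.
    apply: eq_bigr => k _; rewrite !mxE BE.
    have := Mk0 k; have := Y0pos j => h1 h2; field.
    by rewrite (lt0r_neq0 h1) (lt0r_neq0 h2).
- move=> k j aj; apply/matrixP=> i l; rewrite [LHS]mxE Drow [RHS]mxE BE /Y !(sum_anchor _ _ _ _ _ _ _ aj).
  have := Mk0 k; case: aj => h1 _ h2; field.
  by rewrite (lt0r_neq0 h1) (lt0r_neq0 h2).
Qed.
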